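(* Let $Y$ be a topological space and let $f\colon[0,1]\to Y$ be a function whose graph $\{(x,f(x))\colon x\in[0,1]\}$, with the subspace topology inherited from the product $[0,1]\times Y$, is connected and locally connected. Then $f$ is continuous.
   Context: $[0,1]$ carries its usual Euclidean topology. *)

(* Defs.v *)
From HB Require Import structures.
From mathcomp Require Import all_boot all_order all_algebra.
From mathcomp Require Import all_classical all_reals all_analysis.
Set Implicit Arguments. Unset Strict Implicit. Unset Printing Implicit Defensive.
Import Order.TTheory GRing.Theory Num.Theory.
Import numFieldNormedType.Exports.
Local Open Scope classical_set_scope.
Local Open Scope ring_scope.

(* A subset A of a topological space T is locally connected (for its subspace
   topology) when every point x of A has a neighbourhood basis, in the subspace
   topology of A, of connected open sets: for every neighbourhood U of x in T
   there is an open set V of T containing x with A `&` V contained in U and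
   A `&` V connected.  (Open sets of the subspace A are exactly the A `&` V
   with V open in T, and MathComp's [connected] of a set is connectedness
   for the subspace topology.) *)
Definition locally_connected_set {T : topologicalType} (A : set T) : Prop :=
  forall x, A x -> forall U, nbhs x U ->
    exists V : set T, [/\ open V, V x, A `&` V `<=` U & connected (A `&` V)].

Definition graph01 {R : realType} {Y : Type} (f : R -> Y) : set (R * Y) :=
  [set p | exists2 x, x \in `[0, 1]%R & p = (x, f x)].

(* Main.v *)
Require Import Defs.
From HB Require Import structures.
From mathcomp Require Import all_boot all_order all_algebra.
From mathcomp Require Import all_classical all_reals all_analysis.
From mathcomp Require Import lra.
Import numFieldNormedType.Exports.
Import Order.TTheory GRing.Theory Num.Theory.
Local Open Scope classical_set_scope.
Local Open Scope ring_scope.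

Lemma fst_cont (R : realType) (Y : topologicalType) : continuous (@fst R Y).
Proof. by move=> p; exact: cvg_fst. Qed.

Lemma key (R : realType) (Y : topologicalType) (S : set (R * Y)) (c : R) :
  connected S -> (exists p, S p /\ p.1 < c) -> (exists p, S p /\ c < p.1) ->
  exists p, S p /\ p.1 = c.
Proof.
move=> cS [p [Sp pc]] [q [Sq cq]].
apply: contrapT => hn.
have E : (S `&` [set r | r.1 < c]) = S.
  apply: cS.
  - by exists p.
  - exists (fst @^-1` [set r : R | r < c]) => //.
    apply: open_comp; last exact: open_lt.
    by move=> r _; exact: fst_cont.
  - exists (fst @^-1` [set r : R | r <= c]).
      apply: preimage_closed; last exact: closed_le.
      by move=> r _; exact: fst_cont.
    apply/seteqP; split => r [Sr H] /=; split => //.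
      by apply: ltW.
    rewrite lt_neqAle H andbT; apply/eqP => E; apply: hn; by exists r.
have : (S `&` [set r | r.1 < c]) q by rewrite E.
by move=> [_ /=]; rewrite ltNge (ltW cq).
Qed.

Lemma right_pt (R : realType) (Y : topologicalType) (f : R -> Y) (V : set (R * Y)) (x0 : R) :
  connected (graph01 f) -> open V -> V (x0, f x0) -> x0 \in `[0, 1]%R -> x0 < 1 ->
  exists b, [/\ x0 < b, b <= 1 & V (b, f b)].
Proof.
move=> cG oV Vp0 x0in x01.
apply: contrapT => hn.
have E : (graph01 f `&` [set r | x0 < r.1]) = graph01 f.
  apply: cG.
  - exists (1, f 1); split => //=; exists 1 => //.
    by rewrite in_itv /= lexx ler01.
  - exists (fst @^-1` [set r : R | x0 < r]) => //.
    apply: open_comp; last exact: open_gt.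
    by move=> r _; exact: fst_cont.
  - exists ((fst @^-1` [set r : R | x0 <= r]) `&` ~` V).
      apply: closedI; last by apply: open_closedC.
      apply: preimage_closed; last exact: closed_ge.
      by move=> r _; exact: fst_cont.
    apply/seteqP; split => r [Gr H] /=.
      split => //; split; first exact: ltW.
      move: Gr H => [x xin ->] /= Hx Vx; apply: hn; exists x; split => //.
      by move: xin; rewrite in_itv /= => /andP[].
    case: H => H1 H2; split => //.
    rewrite lt_neqAle H1 andbT; apply/eqP => Ex.
    move: Ex H2; case: Gr => [x xin ->] /= <-; by [].
have : (graph01 f `&` [set r | x0 < r.1]) (x0, f x0).
  by rewrite E; exists x0.
by move=> [_ /=]; rewrite ltxx.
Qed.

Lemma left_pt (R : realType) (Y : topologicalType) (f : R -> Y) (V : set (R * Y)) (x0 : R) :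
  connected (graph01 f) -> open V -> V (x0, f x0) -> x0 \in `[0, 1]%R -> 0 < x0 ->
  exists a, [/\ 0 <= a, a < x0 & V (a, f a)].
Proof.
move=> cG oV Vp0 x0in x01.
apply: contrapT => hn.
have E : (graph01 f `&` [set r | r.1 < x0]) = graph01 f.
  apply: cG.
  - exists (0, f 0); split => //=; exists 0 => //.
    by rewrite in_itv /= lexx ler01.
  - exists (fst @^-1` [set r : R | r < x0]) => //.
    apply: open_comp; last exact: open_lt.
    by move=> r _; exact: fst_cont.
  - exists ((fst @^-1` [set r : R | r <= x0]) `&` ~` V).
      apply: closedI; last by apply: open_closedC.
      apply: preimage_closed; last exact: closed_le.
      by move=> r _; exact: fst_cont.
    apply/seteqP; split => r [Gr H] /=.
      split => //; split; first exact: ltW.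
      move: Gr H => [x xin ->] /= Hx Vx; apply: hn; exists x; split => //.
      by move: xin; rewrite in_itv /= => /andP[].
    case: H => H1 H2; split => //.
    rewrite lt_neqAle H1 andbT; apply/eqP => Ex.
    move: Ex H2; case: Gr => [x xin ->] /= ->; by [].
have : (graph01 f `&` [set r | r.1 < x0]) (x0, f x0).
  by rewrite E; exists x0.
by move=> [_ /=]; rewrite ltxx.
Qed.

Lemma from_key (R : realType) (Y : topologicalType) (f : R -> Y) (V : set (R * Y)) W x a b :
  connected (graph01 f `&` V) -> graph01 f `&` V `<=` setT `*` W ->
  (graph01 f `&` V) (a, f a) -> (graph01 f `&` V) (b, f b) -> a < x -> x < b ->
  W (f x).
Proof.
move=> cS sub Sa Sb ax xb.
have [p [Sp px]] := @key _ _ _ _ cS (ex_intro _ (a, f a) (conj Sa ax)) (ex_intro _ (b, f b) (conj Sb xb)).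
have := sub _ Sp; case: Sp => [[y _ E] _]; subst p; move: px => /= ->; by case.
Qed.

Theorem mainTheorem4 (R : realType) (Y : topologicalType) (f : R -> Y) :
  connected (graph01 f) -> locally_connected_set (graph01 f) ->
  {within `[0, 1]%classic, continuous f}.
Proof.
move=> cG lcG; apply/subspace_continuousP => x0 Ax0 W Wx.
have p0G : graph01 f (x0, f x0) by exists x0.
have nU : nbhs (x0, f x0) (setT `*` W).
  by exists (setT, W) => //=; split => //; exact: filterT.
have [V [oV Vp0 sub cGV]] := lcG _ p0G _ nU.
have hL : exists2 da, 0 < da & forall x, 0 <= x -> x < x0 -> x0 - x < da ->
    exists a, [/\ 0 <= a, a < x & V (a, f a)].
  case: (ltP 0 x0) => h.
  - have [a [a0 ax0 Va]] := @left_pt _ _ _ _ _ cG oV Vp0 Ax0 h.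
    exists (x0 - a); first by lra.
    by move=> x _ _ hx; exists a; split => //; lra.
  - by exists 1 => // x x0' xx0 _; exfalso; lra.
have hR : exists2 db, 0 < db & forall x, x <= 1 -> x0 < x -> x - x0 < db ->
    exists b, [/\ b <= 1, x < b & V (b, f b)].
  case: (ltP x0 1) => h.
  - have [b [a0 ax0 Va]] := @right_pt _ _ _ _ _ cG oV Vp0 Ax0 h.
    exists (b - x0); first by lra.
    by move=> x _ _ hx; exists b; split => //; lra.
  - by exists 1 => // x x0' xx0 _; exfalso; lra.
case: hL => da da0 hL; case: hR => db db0 hR.
rewrite nbhs_simpl /within /=; apply/nbhs_ballP.
exists (Num.min da db); first by rewrite /= lt_min da0 db0.
move=> x /= hx Ax.
change (W (f x)).
move: hx; rewrite -ball_normE /= lt_min => /andP[hda hdb].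
have h1 : x0 - x < da := le_lt_trans (ler_norm _) hda.
rewrite distrC in hdb.
have h2 : x - x0 < db := le_lt_trans (ler_norm _) hdb.
move: Ax; rewrite in_itv /= => /andP[x0' x1].
have Sp0 : (graph01 f `&` V) (x0, f x0) by split.
case: (ltgtP x x0) => hx.
- have [a [a0 ax Va]] := hL x x0' hx h1.
  apply: (@from_key _ _ _ _ _ _ a x0 cGV sub) => //.
  split => //; exists a => //; rewrite in_itv /=; apply/andP; split => //; lra.
- have [b [b1 xb Vb]] := hR x x1 hx h2.
  apply: (@from_key _ _ _ _ _ _ x0 b cGV sub) => //.
  split => //; exists b => //; rewrite in_itv /=; apply/andP; split => //; lra.
- by subst x; have := sub _ Sp0; case.
Qed.
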